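(* Let $\epsilon>0$, let $G=(S,B,E)$ be a bipartite graph with weights $w:S\to\mathbb{R}_+$ and a fixed arrival order of $B$. Let $j\in S$ and let $G_{-j}$ be obtained from $G$ by deleting $j$. Fix $x\in[0,1]^S$, let $M$ be the matching produced by $\epsilon$-\textsc{Ranking} on $G$ with samples $x$, and $M_{-j}$ the matching produced by $\epsilon$-\textsc{Ranking} on $G_{-j}$ with samples $x$ restricted to $S\setminus\{j\}$. Then \[ w(M_{-j})-\frac{2}{\epsilon}w_j \le w(M)\le w(M_{-j})+w_j. \] Moreover, for every $i\in B$, the utility $u_i$ of $i$ in the run on $G$ is at least its utility in the run on $G_{-j}$.
   Context: Buyers $B$ arrive one at a time in the fixed order, each revealing its neighborhood $N(i)\subseteq S$. $\epsilon$-\textsc{Ranking} with samples $x\in[0,1]^S$: when buyer $i$ arrives, match $i$ to an unmatched $j\in N(i)$ maximizing $w_j(1-e^{x_j-1-\epsilon})$ (leave $i$ unmatched if none exists), with ties broken according to a fixed total order on $S$. For a matching $M$, $w(M)=\sum_{\{i,j\}\in M}w_j$ where $j\in S$. The utility of a buyer $i$ is $u_i=w_j(1-e^{x_j-1-\epsilon})$ if $i$ is matched to $j$, and $u_i=0$ if $i$ is unmatched. *)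

(* Defs.v *)
From HB Require Import structures.
From mathcomp Require Import all_boot all_order all_algebra.
From mathcomp Require Import reals sequences exp.
Set Implicit Arguments. Unset Strict Implicit. Unset Printing Implicit Defensive.
Import Order.TTheory GRing.Theory Num.Theory.
Local Open Scope ring_scope.

Section Ranking.
Variables (R : realType) (S B : finType).

Definition rk_value (w x : S -> R) (eps : R) (k : S) : R :=
  w k * (1 - expR (x k - 1 - eps)).

(* Buyer i arrives; [used] are the already matched items; [tb] is the fixed
   total order on S used for tie-breaking (earlier in tb = preferred). *)
Definition rk_pick (N : B -> {set S}) (tb : seq S) (w x : S -> R) (eps : R)
    (used : {set S}) (i : B) : option S :=
  let cands := [seq k <- tb | (k \in N i) && (k \notin used)] in
  ohead [seq k <- cands |
           all (fun k' => rk_value w x eps k' <= rk_value w x eps k) cands].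

Fixpoint rk_run (N : B -> {set S}) (tb : seq S) (w x : S -> R) (eps : R)
    (used : {set S}) (ord : seq B) : seq (B * S) :=
  match ord with
  | [::] => [::]
  | i :: ord' =>
      match rk_pick N tb w x eps used i with
      | None => rk_run N tb w x eps used ord'
      | Some k => (i, k) :: rk_run N tb w x eps (k |: used) ord'
      end
  end.

Definition ranking (N : B -> {set S}) (ord : seq B) (tb : seq S)
    (w x : S -> R) (eps : R) : seq (B * S) :=
  rk_run N tb w x eps set0 ord.

Definition delete_item (N : B -> {set S}) (j : S) : B -> {set S} :=
  fun i => N i :\ j.

Definition mweight (w : S -> R) (M : seq (B * S)) : R :=
  \sum_(p <- M) w p.2.

Definition matched_to (M : seq (B * S)) (i : B) : option S :=
  ohead [seq p.2 | p <- M & p.1 == i].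

Definition utility (w x : S -> R) (eps : R) (M : seq (B * S)) (i : B) : R :=
  if matched_to M i is Some k then rk_value w x eps k else 0.

End Ranking.

(* Main.v *)
Require Import Defs.
From HB Require Import structures.
From mathcomp Require Import all_boot all_order all_algebra.
From mathcomp Require Import reals sequences exp.
From mathcomp Require Import ring lra.
Import Order.TTheory GRing.Theory Num.Theory.
Local Open Scope ring_scope.
Set Implicit Arguments. Unset Strict Implicit. Unset Printing Implicit Defensive.

Section Gen.
Variables (R : realType) (S : eqType) (v : S -> R).

Definition pk (s : seq S) := ohead [seq k <- s | all (fun k' => v k' <= v k) s].

Lemma ohead_filter_imp (a b : pred S) s k :
  ohead (filter a s) = Some k -> b k -> {in s, forall y, b y -> a y} ->
  ohead (filter b s) = Some k.
Proof.
elim: s => [//|y s IH] /=.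
case ay: (a y) => /=.
  by case=> <- bk _; rewrite bk.
move=> h bk hin.
have -> : b y = false.
  by apply/negbTE/negP => /(hin y (mem_head _ _)); rewrite ay.
apply: IH => // z zs; apply: hin; by rewrite in_cons zs orbT.
Qed.

Lemma ohead_mem (a : pred S) s k : ohead (filter a s) = Some k -> k \in s /\ a k.
Proof.
elim: s => [//|y s IH] /=.
case ay: (a y) => /=.
  by case=> <-; rewrite mem_head.
by move/IH => [ks ->]; rewrite in_cons ks orbT.
Qed.

Lemma pk_some (p : pred S) s k : pk (filter p s) = Some k ->
  [/\ k \in s, p k & forall z, z \in s -> p z -> v z <= v k].
Proof.
rewrite /pk => /ohead_mem [].
rewrite mem_filter => /andP [pk ks] /allP h; split => // z zs pz.
by apply: h; rewrite mem_filter pz.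
Qed.

Lemma max_exists (s : seq S) : s != [::] -> exists2 y, y \in s & all (fun z => v z <= v y) s.
Proof.
elim: s => [//|a s IH] _.
case: s IH => [|b s] IH.
  by exists a; rewrite ?mem_head //= lexx.
have [y ys hy] := IH isT.
case: (leP (v a) (v y)) => hay.
  exists y; first by rewrite in_cons ys orbT.
  by apply/allP => z; rewrite in_cons => /orP [/eqP -> // | /(allP hy)].
exists a; first by rewrite mem_head.
apply/allP => z; rewrite in_cons => /orP [/eqP -> // | /(allP hy) hz].
exact: le_trans hz (ltW hay).
Qed.

Lemma pk_none (p : pred S) s : pk (filter p s) = None -> forall z, z \in s -> ~~ p z.
Proof.
move=> h z zs; apply/negP => pz.
have ne : filter p s != [::].
  apply/eqP => e; have : z \in filter p s by rewrite mem_filter pz zs.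
  by rewrite e.
have [y ys hy] := @max_exists _ ne.
move: h; rewrite /pk.
have : y \in [seq k <- filter p s | all (fun k' => v k' <= v k) (filter p s)].
  by rewrite mem_filter hy ys.
by case: [seq k <- _ | _].
Qed.

Lemma pk_sub (p q : pred S) s k : pk (filter p s) = Some k ->
  (forall z, z \in s -> q z -> p z) -> q k -> pk (filter q s) = Some k.
Proof.
move=> h qp qk.
have [ks pk' hmax] := @pk_some p s k h.
move: h; rewrite /pk -!filter_predI => h.
apply: (@ohead_filter_imp _ _ s k h).
  rewrite /= qk andbT; apply/allP => z; rewrite mem_filter => /andP [qz zs].
  by apply: hmax => //; apply: qp.
move=> y ys /= /andP [/allP hy qy]; rewrite (qp y ys qy) andbT.
have kyy : v k <= v y by apply: hy; rewrite mem_filter qk ks.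
apply/allP => z; rewrite mem_filter => /andP [pz zs].
exact: le_trans (hmax z zs pz) kyy.
Qed.

End Gen.
Section Main.
Variables (R : realType) (S B : finType) (N : B -> {set S}) (tb : seq S)
  (w x : S -> R) (eps : R) (j : S).
Hypothesis tbP : forall k, k \in tb.
Hypothesis w0 : forall k, 0 <= w k.
Hypothesis x01 : forall k, 0 <= x k <= 1.
Hypothesis eps0 : 0 < eps.

Local Notation v := (rk_value w x eps).

Lemma v_ge0 k : 0 <= v k.
Proof.
rewrite /rk_value mulr_ge0 // subr_ge0 -[X in _ <= X]expR0 ler_expR.
have := x01 k; have := eps0; move=> ? /andP [? ?]; lra.
Qed.

Lemma rk_pickE (N' : B -> {set S}) U i : rk_pick N' tb w x eps U i =
  pk v (filter (fun k => (k \in N' i) && (k \notin U)) tb).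
Proof. by []. Qed.

Lemma matched_cons (M : seq (B * S)) i0 k i :
  matched_to ((i0, k) :: M) i = if i0 == i then Some k else matched_to M i.
Proof. by rewrite /matched_to /=; case: (i0 == i). Qed.

Lemma run_notin (N' : B -> {set S}) U ord i : i \notin ord ->
  matched_to (rk_run N' tb w x eps U ord) i = None.
Proof.
elim: ord U => [//|i0 ord IH] U /=; rewrite in_cons negb_or => /andP [ne ni].
case: (rk_pick _ _ _ _ _ _ _) => [k|]; last exact: IH.
by rewrite matched_cons eq_sym (negbTE ne) IH.
Qed.

Definition Dw (d : option S) := if d is Some m then w m else 0.

Lemma run_cmp (ord : seq B) (U U' : {set S}) (d : option S) :
  uniq ord ->
  (forall k, (k \notin U) = ((k \notin U') && (k != j)) || (d == Some k)) ->
  (forall k, d = Some k -> ~~((k \notin U') && (k != j)) /\ v k <= v j) ->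
  (exists dF, (forall k, dF = Some k -> v k <= v j) /\
     mweight w (rk_run N tb w x eps U ord) + Dw dF =
     mweight w (rk_run (delete_item N j) tb w x eps U' ord) + Dw d) /\
  (forall i, utility w x eps (rk_run (delete_item N j) tb w x eps U' ord) i
          <= utility w x eps (rk_run N tb w x eps U ord) i).
Proof.
elim: ord U U' d => [|i0 ord IH] U U' d.
  move=> _ _ hd; split.
    by exists d; split => // k /hd [].
  by move=> i; rewrite /utility /matched_to /= lexx.
move=> /= /andP [i0n uo] inv hd.
rewrite !rk_pickE.
set pG := (fun k => (k \in N i0) && (k \notin U)).
set pG' := (fun k => (k \in delete_item N j i0) && (k \notin U')).
have sub : forall z, z \in tb -> pG' z -> pG z.
  move=> z _; rewrite /pG /pG' /delete_item in_setD1 inv.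
  by case/andP => /andP [-> ->] ->.
have mw : forall k M, mweight w ((i0, k) :: M) = w k + mweight w M.
  by move=> k M; rewrite /mweight big_cons.
case hG: (pk v (filter pG tb)) => [k|]; last first.
  have -> : pk v (filter pG' tb) = None.
    case hG': (pk v (filter pG' tb)) => [k'|] //.
    have [_ p' _] := pk_some hG'.
    by have := pk_none hG (tbP k'); rewrite (sub _ (tbP k') p').
  exact: IH.
have [_ pGk maxk] := pk_some hG.
have [dk|dk] := eqVneq d (Some k); last first.
  have ak : (k \notin U') && (k != j).
    move: pGk; rewrite /pG inv => /andP [_ /orP [//|]].
    by rewrite (negbTE dk).
  have pG'k : pG' k.
    by rewrite /pG' /delete_item in_setD1; move: pGk ak; rewrite /pG => /andP [-> _] /andP [-> ->].
  rewrite (pk_sub hG sub pG'k).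
  have inv' : forall z, (z \notin k |: U) = (z \notin k |: U') && (z != j) || (d == Some z).
    move=> z; rewrite !in_setU1 !negb_or inv.
    case: (eqVneq z k) => [->|zk] //=.
    by rewrite (negbTE dk).
  have hd' : forall z, d = Some z -> ~~ ((z \notin k |: U') && (z != j)) /\ v z <= v j.
    move=> z /hd [h1 h2]; split => //.
    by rewrite in_setU1 negb_or; move: h1; apply: contra => /andP [/andP [_ ->] ->].
  have [[dF [hdF e]] hu] := IH (k |: U) (k |: U') d uo inv' hd'.
  split.
    by exists dF; split => //; rewrite !mw -!addrA e.
  move=> i; rewrite /utility !matched_cons; case: (i0 == i) => //.
  exact: hu.
have [nak vkj] := hd k dk.
case hG': (pk v (filter pG' tb)) => [k'|].
  have [_ pG'k' _] := pk_some hG'.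
  have vk' : v k' <= v k by apply: maxk; [exact: tbP| exact: sub (tbP k') pG'k'].
  have ak' : (k' \notin U') && (k' != j).
    by move: pG'k'; rewrite /pG' /delete_item in_setD1 => /andP [/andP [-> _] ->].
  have kk' : k' != k by apply: contraNneq nak => <-.
  have inv' : forall z, (z \notin k |: U) = (z \notin k' |: U') && (z != j) || (Some k' == Some z).
    move=> z; rewrite !in_setU1 !negb_or inv dk.
    case: (eqVneq z k') => [->|zk'] /=.
      by rewrite kk' ak' eqxx.
    case: (eqVneq z k) => [->|zk] /=.
      by rewrite (negbTE nak) (inj_eq (@Some_inj _)) (negbTE kk').
    by rewrite !(inj_eq (@Some_inj _)) ![_ == z]eq_sym (negbTE zk) (negbTE zk').
  have hd' : forall z, Some k' = Some z -> ~~ ((z \notin k' |: U') && (z != j)) /\ v z <= v j.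
    move=> z [<-]; split; last exact: le_trans vk' vkj.
    by rewrite in_setU1 eq_refl.
  have [[dF [hdF e]] hu] := IH (k |: U) (k' |: U') (Some k') uo inv' hd'.
  split.
    by exists dF; split => //; rewrite !mw dk /=; move: e => /=; lra.
  move=> i; rewrite /utility !matched_cons; case: (i0 == i) => //.
  exact: hu.
have inv' : forall z, (z \notin k |: U) = (z \notin U') && (z != j) || (None == Some z).
  move=> z; rewrite !in_setU1 !negb_or inv dk orbF.
  case: (eqVneq z k) => [->|zk] /=.
    by rewrite (negbTE nak).
  by rewrite [Some k == Some z]eq_sym (inj_eq (@Some_inj _)) (negbTE zk) orbF.
have [[dF [hdF e]] hu] := IH (k |: U) U' None uo inv' (fun _ h => match h with end).
split.
  by exists dF; split => //; rewrite !mw dk /=; move: e => /=; lra.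
move=> i; rewrite /utility !matched_cons; case: (eqVneq i0 i) => [<-|_]; last exact: hu.
by rewrite run_notin // v_ge0.
Qed.

End Main.
Section Bound.
Variables (R : realType) (S : finType) (w x : S -> R) (eps : R) (j : S).
Hypothesis w0 : forall k, 0 <= w k.
Hypothesis x01 : forall k, 0 <= x k <= 1.
Hypothesis eps0 : 0 < eps.

Lemma bound m : rk_value w x eps m <= rk_value w x eps j ->
  w m <= w j + 2 / eps * w j.
Proof.
move=> hv.
set E := expR eps.
have hE : 1 + eps <= E := expR_ge1Dx eps.
have Epos : 0 < E := expR_gt0 eps.
have vm : w m * (1 - E^-1) <= rk_value w x eps m.
  rewrite /rk_value; apply: ler_wpM2l; first exact: w0.
  rewrite lerD2l lerN2 /E -expRN ler_expR.
  by have := x01 m => /andP [? ?]; lra.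
have vj : rk_value w x eps j <= w j.
  rewrite /rk_value -[X in _ <= X]mulr1; apply: ler_wpM2l; first exact: w0.
  by have := expR_gt0 (x j - 1 - eps); lra.
have h1 : w m * (1 - E^-1) <= w j by apply: le_trans vm (le_trans hv vj).
have h2 : w m * (E - 1) <= w j * E.
  have -> : w m * (E - 1) = w m * (1 - E^-1) * E.
    by field; rewrite gt_eqF.
  by rewrite ler_pM2r.
have key : w m * eps <= w j * eps + w j.
  case: (leP (w m) (w j)) => hab.
    have := ler_wpM2r (ltW eps0) hab; have := w0 j; lra.
  have hd : 0 <= w m - w j by lra.
  have := ler_wpM2l hd (_ : eps <= E - 1); move/(_ ltac:(lra)).
  move: h2; rewrite !mulrBr !mulrBl !mulr1; lra.
set y := 2 / eps.
have hy : eps * y = 2 by rewrite /y mulrC divfK // gt_eqF.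
have y0 : 0 < y by rewrite /y divr_gt0.
have := ler_wpM2r (ltW y0) key; rewrite mulrDl -!mulrA hy => k2.
have := mulr_ge0 (w0 j) (ltW y0).
move: k2.
rewrite mulrA -/y [y * _]mulrC; lra.
Qed.
End Bound.

Theorem lemma6 (R : realType) (S B : finType) (N : B -> {set S})
  (ord : seq B) (tb : seq S) (w x : S -> R) (eps : R) (j : S) :
  0 < eps ->
  (forall k, 0 <= w k) ->
  (forall k, 0 <= x k <= 1) ->
  uniq ord -> (forall i, i \in ord) ->
  uniq tb -> (forall k, k \in tb) ->
  let M := ranking N ord tb w x eps in
  let Mj := ranking (delete_item N j) ord tb w x eps in
  [/\ mweight w Mj - (2 / eps) * w j <= mweight w M,
      mweight w M <= mweight w Mj + w j &
      forall i : B, utility w x eps Mj i <= utility w x eps M i].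
Proof.
move=> eps0 w0 x01 uo _ _ tbP M Mj.
have inv : forall k : S, (k \notin (set0 : {set S})) =
    (k \notin (set0 : {set S})) && (k != j) || (Some j == Some k).
  move=> k; rewrite !in_set0 /= (inj_eq (@Some_inj _)) eq_sym.
  by case: (j == k).
have hd : forall k, Some j = Some k ->
    ~~ ((k \notin (set0 : {set S})) && (k != j)) /\ rk_value w x eps k <= rk_value w x eps j.
  by move=> k [<-]; rewrite eqxx andbF lexx.
have [[dF [hdF e]] hu] := run_cmp N tbP w0 x01 eps0 uo inv hd.
rewrite /M /Mj /ranking; split => //.
- have p2 : 0 <= 2 / eps * w j by rewrite mulr_ge0 // divr_ge0 // ltW.
  case: dF hdF e => [m|] hdF e; rewrite /Dw in e; last by move: e p2; have := w0 j; lra.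
  have := bound w0 x01 eps0 (hdF m erefl); move: e; lra.
- move: e; case: dF hdF => [m|] _ e; rewrite /Dw in e; last by move: e; lra.
  by have := w0 m; move: e; lra.
Qed.
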